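(* Let $f:\mathbb{Z}^n\to\mathbb{R}\cup\{+\infty\}$ be M-convex, $\emptyset\neq R\subsetneq N$, and $y\in\operatorname{dom} f$. Let $i\in R$ satisfy $f'(y;i,j)>\phi^R(y)$ for every $j\in N\setminus R$, and let $h\in R$, $k\in N\setminus R$ satisfy $f'(y;h,k)=\phi^R(y)$. Then $f'(y+\chi_h-\chi_k;i,j)>\phi^R(y)$ for every $j\in N\setminus R$.
   Context: $N=\{1,\dots,n\}$; $\chi_i\in\{0,1\}^n$ is the $i$-th unit vector. For $f:\mathbb{Z}^n\to\mathbb{R}\cup\{+\infty\}$, $\operatorname{dom} f=\{x\in\mathbb{Z}^n: f(x)<+\infty\}$. $f$ is M-convex if $\operatorname{dom} f\neq\emptyset$ and for all $x,y\in\operatorname{dom} f$ and every $i$ with $x(i)>y(i)$ there is $j$ with $x(j)<y(j)$ such that $f(x)+f(y)\ge f(x-\chi_i+\chi_j)+f(y+\chi_i-\chi_j)$. $f'(x;i,j)=f(x+\chi_i-\chi_j)-f(x)$ (possibly $+\infty$), and $\phi^R(x)=\min_{i\in R,\,j\in N\setminus R}f'(x;i,j)$. *)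

(* Defs.v *)
From HB Require Import structures.
From mathcomp Require Import all_boot all_order all_algebra.
From mathcomp Require Import constructive_ereal.
Set Implicit Arguments. Unset Strict Implicit. Unset Printing Implicit Defensive.
Import Order.TTheory GRing.Theory Num.Theory.
Local Open Scope ring_scope.
Local Open Scope ereal_scope.

Notation pt n := {ffun 'I_n -> int}.

Definition chi (n : nat) (i : 'I_n) : pt n := [ffun k => ((k == i) : int)%R].

(* f : Z^n -> R ∪ {+oo} is modelled as f : pt n -> \bar R with f x != -oo for all x *)
Definition dom (R : numDomainType) (n : nat) (f : pt n -> \bar R) (x : pt n) : Prop :=
  f x < +oo.

Definition Mconvex (R : numDomainType) (n : nat) (f : pt n -> \bar R) : Prop :=
  (exists x, dom f x) /\
  forall x y, dom f x -> dom f y ->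
    forall i : 'I_n, (y i < x i)%R ->
      exists2 j : 'I_n, (x j < y j)%R &
        f (x - chi i + chi j)%R + f (y + chi i - chi j)%R <= f x + f y.

Definition fder (R : numDomainType) (n : nat) (f : pt n -> \bar R) (x : pt n) (i j : 'I_n)
  : \bar R := f (x + chi i - chi j)%R - f x.

Definition phiR (R : realDomainType) (n : nat) (f : pt n -> \bar R) (S : {set 'I_n}) (x : pt n)
  : \bar R :=
  \big[mine/+oo]_(i in S) \big[mine/+oo]_(j in ~: S) fder f x i j.

(* Main.v *)
Require Import Defs.
From HB Require Import structures.
From mathcomp Require Import all_boot all_order all_algebra.
From mathcomp Require Import constructive_ereal.
From mathcomp Require Import zify ring lra.
Import Order.TTheory GRing.Theory Num.Theory.
Local Open Scope ring_scope.
Local Open Scope ereal_scope.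

Lemma phiR_le (R : realDomainType) (n : nat) (f : {ffun 'I_n -> int} -> \bar R)
  (S : {set 'I_n}) y h j : h \in S -> j \notin S -> phiR f S y <= fder f y h j.
Proof.
move=> hS jS; rewrite /phiR.
apply: le_trans (bigmin_le_cond _ _ hS) _.
apply: bigmin_le_cond; by rewrite inE.
Qed.

Lemma fin_ex (R : realDomainType) (x : \bar R) : x != -oo -> x != +oo -> exists r, x = r%:E.
Proof. by case: x => [r| |] //; exists r. Qed.

Theorem mainTheorem10 (R : realDomainType) (n : nat) (f : {ffun 'I_n -> int} -> \bar R)
  (S : {set 'I_n}) (y : {ffun 'I_n -> int}) (i h k : 'I_n) :
  (forall x, f x != -oo) ->
  Mconvex f ->
  S != set0 -> S != [set: 'I_n] ->
  dom f y ->
  i \in S ->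
  (forall j, j \notin S -> phiR f S y < fder f y i j) ->
  h \in S -> k \notin S ->
  fder f y h k = phiR f S y ->
  forall j, j \notin S -> phiR f S y < fder f (y + chi h - chi k)%R i j.
Proof.
move=> fN [_ Mc] _ _ dy iS Hi hS kS Hhk j jS.
have [a fya] : exists a, f y = a%:E by apply: fin_ex => //; rewrite /dom in dy; rewrite lt_eqF.
set y' := (y + chi h - chi k)%R.
have Hik := Hi k kS.
have ih : i != h by apply/eqP => eih; move: Hik; rewrite eih Hhk ltxx.
have ik : i != k by apply/eqP => e; move: kS; rewrite -e iS.
have ij : i != j by apply/eqP => e; move: jS; rewrite -e iS.
have [b fy'b] : exists b, f y' = b%:E.
  apply: fin_ex => //; apply/eqP => e; move: Hik; rewrite -Hhk /fder -/y' e fya.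
  move: (fN (y + chi i - chi k)%R); case: (f (y + chi i - chi k)%R) => //.
have phiE : phiR f S y = (b - a)%:E by rewrite -Hhk /fder -/y' fy'b fya.
rewrite phiE; rewrite ltNge; apply/negP => Hz.
set z := (y' + chi i - chi j)%R.
have [c fzc] : exists c, f z = c%:E.
  apply: fin_ex => //; apply/eqP => e; move: Hz; rewrite /fder -/z e fy'b //.
have Hc : (c - b <= b - a)%R by move: Hz; rewrite /fder -/z fzc fy'b -EFinB lee_fin.
have dz : dom f z by rewrite /dom fzc ltry.
have chiE (p q : 'I_n) : chi p q = ((q == p) : int)%R by rewrite /chi ffunE.
have yz : (y i < z i)%R.
  rewrite /z /y' !ffunE ?chiE eqxx (negbTE ih) (negbTE ik) (negbTE ij) /=; lia.
have [l zl Hex] := Mc z y dz dy i yz.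
have lkj : (l == k) || (l == j).
  move: zl; rewrite /z /y' !ffunE ?chiE.
  case: (eqVneq l k) => // nlk; case: (eqVneq l j) => // nlj.
  rewrite ?orbF => H; exfalso; move: H.
  move: (y l) (l == h) (l == i); clear => yl [] []; lia.
have lS : l \notin S by case/orP: lkj => /eqP ->.
have Hil := Hi l lS; rewrite phiE in Hil.
have [d fdd] : exists d, f (y + chi i - chi l)%R = d%:E.
  apply: fin_ex => //; apply/eqP => e; move: Hex; rewrite e fzc fya.
  by case: (f (z - chi i + chi l)%R) (fN (z - chi i + chi l)%R).
have Hd : (b - a < d - a)%R by move: Hil; rewrite /fder fdd fya -EFinB lte_fin.
have [e fwe] : exists e, f (z - chi i + chi l)%R = e%:E.
  apply: fin_ex => //; apply/eqP => ee; move: Hex; rewrite ee fdd fzc fya //.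
have He : (e + d <= c + a)%R by move: Hex; rewrite fwe fdd fzc fya -!EFinD lee_fin.
have eb : (e < b)%R by clear -Hc Hd He; lra.
case: (eqVneq l j) => [elj|nlj].
  have : (z - chi i + chi l)%R = y'.
    by apply/ffunP => q; rewrite /z elj !ffunE; ring.
  move=> E; move: fwe; rewrite E fy'b => -[eb']; by move: eb; rewrite eb' ltxx.
have elk : l = k by move: lkj; rewrite (negbTE nlj) orbF => /eqP.
have : (z - chi i + chi l)%R = (y + chi h - chi j)%R.
  by apply/ffunP => q; rewrite /z /y' elk !ffunE; ring.
move=> E; have := @phiR_le R n f S y h j hS jS.
rewrite phiE /fder -E fwe fya -EFinB lee_fin => H; clear -H eb; lra.
Qed.
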